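(* Let $G=([k],E)$ be realisable in $\mathbb{R}^d$ with profile $\boldsymbol\lambda$, where $\lambda_i\ge 2$ for every $i\in[k]$. If the girth of $G$ is $2\ell+1$ with $\ell>1$, then $\zeta(G,\boldsymbol\lambda)\le\frac d2$. If the girth of $G$ is $2\ell$ with $\ell>2$, then $\zeta(G,\boldsymbol\lambda)\le\frac{\ell}{2\ell-1}d$.
   Context: The girth of a graph is the length of its shortest cycle. A sphere of dimension $\ell$ in $\mathbb{R}^d$ ($0\le\ell\le d-1$) is the set of points of an $(\ell+1)$-dimensional affine subspace at a fixed positive distance from a fixed point of that subspace. For finite sets $P_1,\dots,P_k\subset\mathbb{R}^d$, the profile of $(P_1,\dots,P_k)$ is $\boldsymbol\lambda=(\lambda_1,\dots,\lambda_k)$, where $\lambda_i=0$ if $|P_i|\le 3$, and otherwise $\lambda_i$ is the smallest $\ell$ such that some sphere of dimension $\ell$ contains $P_i$, with $\lambda_i=d$ if no sphere contains $P_i$. A graph $G=([k],E)$ is compatible with $(P_1,\dots,P_k)$ if $\|p-p'\|=1$ for every edge $\{i,j\}\in E$ and all $p\in P_i$, $p'\in P_j$. $G$ is realisable in $\mathbb{R}^d$ with profile $\boldsymbol\lambda$ if there exist finite sets $P_1,\dots,P_k\subset\mathbb{R}^d$ with profile $\boldsymbol\lambda$ that are compatible with $G$. For $i\in[k]$ let $V_i=\{j\in[k]\setminus\{i\}:\{i,j\}\notin E\}$. $\zeta(G,\boldsymbol\lambda)$ denotes the optimum value of the linear program: minimize $\sum_{i\in[k]}\lambda_ix_i$ over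 $\mathbf{x}\in\mathbb{R}^k$ subject to $x_i\ge 0$ and $\lambda_ix_i+\sum_{j\in V_i}x_j\ge 1$ for all $i\in[k]$. *)

(* Defs.v *)
From HB Require Import structures.
From mathcomp Require Import all_boot all_order all_algebra.
From mathcomp Require Import boolp classical_sets reals.
Set Implicit Arguments. Unset Strict Implicit. Unset Printing Implicit Defensive.
Import Order.TTheory GRing.Theory Num.Theory.
Local Open Scope ring_scope.

Section Defs.
Variable R : realType.

Definition enorm (d : nat) (v : 'rV[R]_d) : R :=
  Num.sqrt (\sum_(i < d) v 0 i ^+ 2).

(* A sphere of dimension l in R^d: the points of the (l+1)-dimensional affine
   subspace c + rowspace(U) (rank U = l+1) at distance r > 0 from c.
   [in_sphere_dim P l] : some sphere of dimension l contains all points of P. *)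
Definition in_sphere_dim (d : nat) (P : seq 'rV[R]_d) (l : nat) : Prop :=
  exists (c : 'rV[R]_d) (U : 'M[R]_d) (r : R),
    [/\ 0 < r, \rank U = l.+1 &
        forall p, p \in P -> (p - c <= U)%MS /\ enorm (p - c) = r].

Definition is_profile (d k : nat) (P : 'I_k -> seq 'rV[R]_d) (lam : 'I_k -> nat)
  : Prop :=
  forall i : 'I_k,
    if (size (P i) <= 3)%N then lam i = 0%N
    else [/\ (lam i <= d)%N,
             (lam i < d)%N -> in_sphere_dim (P i) (lam i) &
             forall l, (l < lam i)%N -> ~ in_sphere_dim (P i) l].

Definition compatible (d k : nat) (E : rel 'I_k) (P : 'I_k -> seq 'rV[R]_d)
  : Prop :=
  forall i j, E i j -> forall p p', p \in P i -> p' \in P j -> enorm (p - p') = 1.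

Definition realisable (d k : nat) (E : rel 'I_k) (lam : 'I_k -> nat) : Prop :=
  exists P : 'I_k -> seq 'rV[R]_d,
    [/\ forall i, uniq (P i), is_profile P lam & compatible E P].

Definition lp_feasible (k : nat) (E : rel 'I_k) (lam : 'I_k -> nat)
  (x : 'I_k -> R) : Prop :=
  forall i : 'I_k, 0 <= x i /\
    1 <= (lam i)%:R * x i + \sum_(j < k | (j != i) && ~~ E i j) x j.

Definition lp_obj (k : nat) (lam : 'I_k -> nat) (x : 'I_k -> R) : R :=
  \sum_(i < k) (lam i)%:R * x i.

Definition zeta (k : nat) (E : rel 'I_k) (lam : 'I_k -> nat) : R :=
  inf [set lp_obj lam x | x in lp_feasible E lam].

End Defs.

(* cycles and girth of a simple graph given by a symmetric irreflexive relation *)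
Definition is_graph_cycle (k : nat) (E : rel 'I_k) (s : seq 'I_k) : Prop :=
  ucycle E s /\ (3 <= size s)%N.

Definition has_girth (k : nat) (E : rel 'I_k) (g : nat) : Prop :=
  (exists s, is_graph_cycle E s /\ size s = g) /\
  (forall s, is_graph_cycle E s -> (g <= size s)%N).

(* Main.v *)
Require Import Defs.
From HB Require Import structures.
From mathcomp Require Import all_boot all_order all_algebra.
From mathcomp Require Import boolp classical_sets reals.
From mathcomp Require Import zify ring lra.
Import Order.TTheory GRing.Theory Num.Theory.
Local Open Scope ring_scope.
Set Implicit Arguments. Unset Strict Implicit.
Section LA.
Variable R : realType.

Definition orth d m n (A : 'M[R]_(m,d)) (B : 'M[R]_(n,d)) := A *m B^T = 0.

Lemma orth_sym d m n (A : 'M[R]_(m,d)) (B : 'M[R]_(n,d)) : orth A B -> orth B A.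
Proof. by rewrite /orth => H; rewrite -{1}(trmxK B) -trmx_mul H trmx0. Qed.

Lemma orth_subl d m m' n (A : 'M[R]_(m,d)) (A' : 'M[R]_(m',d)) (B : 'M[R]_(n,d)) :
  (A' <= A)%MS -> orth A B -> orth A' B.
Proof. by case/submxP=> X -> H; rewrite /orth -mulmxA H mulmx0. Qed.

Lemma orth_subr d m n n' (A : 'M[R]_(m,d)) (B : 'M[R]_(n,d)) (B' : 'M[R]_(n',d)) :
  (B' <= B)%MS -> orth A B -> orth A B'.
Proof. by move=> s /orth_sym H; apply: orth_sym; apply: orth_subl s H. Qed.

Lemma orth_rank d m n (A : 'M[R]_(m,d)) (B : 'M[R]_(n,d)) :
  orth A B -> (\rank A + \rank B <= d)%N.
Proof.
move=> /orth_sym H.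
have : (B <= kermx A^T)%MS by apply/sub_kermxP.
move/mxrankS; rewrite mxrank_ker mxrank_tr => h.
have := rank_leq_col A. lia.
Qed.

Lemma orth_self d m (A : 'M[R]_(m,d)) : orth A A -> A = 0.
Proof.
move=> H; apply/matrixP => i j; rewrite mxE.
have : (A *m A^T) i i = 0 by rewrite H mxE.
rewrite mxE => /eqP; rewrite psumr_eq0; last by move=> t _; rewrite mxE -expr2 sqr_ge0.
move=> /allP /(_ j (mem_index_enum _)) /implyP /(_ isT).
by rewrite mxE -expr2 sqrf_eq0 => /eqP.
Qed.

Lemma orth_adds d m1 m2 n (A1 : 'M[R]_(m1,d)) (A2 : 'M[R]_(m2,d)) (B : 'M[R]_(n,d)) :
  orth A1 B -> orth A2 B -> orth (A1 + A2)%MS B.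
Proof.
move=> h1 h2; apply: (@orth_subl _ _ _ _ (col_mx A1 A2)); first by rewrite addsmxE.
by rewrite /orth mul_col_mx h1 h2 col_mx0.
Qed.

Lemma odd_cycle_rank d l (V : nat -> 'M[R]_d) :
  (forall i, (i < 2 * l)%N -> orth (V i) (V i.+1)) -> orth (V (2 * l)%N) (V 0%N) ->
  (\sum_(i < (2 * l).+1) \rank (V i) <= l * d)%N.
Proof.
elim: l V => [|l IH] V Hc Hl.
  rewrite big_ord1 /=. by rewrite (orth_self Hl) mxrank0.
pose W := (V 0%N :&: V 2%N)%MS.
pose V' := fun i => if i is 0 then W else V i.+2.
have := IH V'.
have h0 : orth (V 0%N) (V 1%N) by apply: Hc; lia.
have h1 : orth (V 2%N) (V 1%N) by apply: orth_sym; apply: Hc; lia.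
have -> : (2 * l.+1 = (2 * l).+2)%N by lia.
move=> IH'.
rewrite big_ord_recl [X in (_ + X <= _)%N]big_ord_recl [X in (_ + (_ + X) <= _)%N]big_ord_recl /=.
have Esum : (\sum_(i < 2 * l) \rank (V (bump 0 (bump 0 (bump 0 i)))) =
   \sum_(i < 2 * l) \rank (V (bump 0 i).+2))%N.
  by apply: eq_bigr => i _; rewrite /bump /=.
rewrite Esum.

have := mxrank_sum_cap (V 0%N) (V 2%N).
have := orth_rank (orth_adds h0 h1).
have H1 : forall i : nat, (i < 2 * l)%N -> orth (V' i) (V' i.+1).
  move=> [|i] hi /=.
    apply: orth_subl (capmxSr _ _) _. by apply: Hc; lia.
  by apply: Hc; lia.
have H2 : orth (V' (2 * l)%N) (V' 0%N).
  rewrite /V'. case: l {IH IH' Esum H1} Hc Hl => [|l] Hc Hl /=.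
    apply: orth_subl (capmxSl _ _) _. apply: orth_subr (capmxSr _ _) _.
    by apply: orth_sym; rewrite /= in Hl.
  apply: orth_subr (capmxSl _ _) _.
  by have -> : ((2 * l.+1).+2 = 2 * l.+2)%N by lia.
have := IH' H1 H2; rewrite big_ord_recl /= -/W.
have := mxrank_sum_cap (V 0%N) (V 2%N).
have := orth_rank (orth_adds h0 h1).
rewrite -/W.
rewrite /bump /= !add1n. lia.
Qed.
End LA.

Section Geo.
Variables (R : realType) (d : nat).
Implicit Types (P Q : seq 'rV[R]_d).


Definition Dmx P : 'M[R]_(size P, d) := \matrix_(a, j) (nth 0 P a - nth 0 P 0) 0 j.

Lemma Dmx_sub P p : p \in P -> (p - nth 0 P 0 <= Dmx P)%MS.
Proof.
move=> pP; have hi : (index p P < size P)%N by rewrite index_mem.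
have -> : p - nth 0 P 0 = row (Ordinal hi) (Dmx P).
  by apply/rowP => j; rewrite !mxE /= nth_index.
exact: row_sub.
Qed.

Lemma sq_enorm1 (v : 'rV[R]_d) : enorm v = 1 -> \sum_(i < d) v 0 i ^+ 2 = 1.
Proof.
rewrite /enorm => h.
have h0 : 0 <= \sum_(i < d) v 0 i ^+ 2 by apply: sumr_ge0 => i _; exact: sqr_ge0.
by rewrite -(sqr_sqrtr h0) h expr1n.
Qed.

Lemma polar (x y u v : 'rV[R]_d) :
  enorm (x - u) = 1 -> enorm (x - v) = 1 -> enorm (y - u) = 1 -> enorm (y - v) = 1 ->
  \sum_(t < d) (x - y) 0 t * (u - v) 0 t = 0.
Proof.
move=> /sq_enorm1 h1 /sq_enorm1 h2 /sq_enorm1 h3 /sq_enorm1 h4.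
have : \sum_(t < d) ((x - u) 0 t ^+ 2 - (x - v) 0 t ^+ 2 - (y - u) 0 t ^+ 2 + (y - v) 0 t ^+ 2) = 0.
  by rewrite big_split /= !sumrB h1 h2 h3 h4; ring.
have -> : \sum_(t < d) ((x - u) 0 t ^+ 2 - (x - v) 0 t ^+ 2 - (y - u) 0 t ^+ 2 + (y - v) 0 t ^+ 2)
   = - 2 * \sum_(t < d) (x - y) 0 t * (u - v) 0 t.
  rewrite mulr_sumr; apply: eq_bigr => t _; rewrite !mxE; ring.
move/eqP; rewrite mulf_eq0 oppr_eq0 pnatr_eq0 /= => /eqP; done.
Qed.

Lemma orth_D P Q : (forall p q, p \in P -> q \in Q -> enorm (p - q) = 1) -> orth (Dmx P) (Dmx Q).
Proof.
move=> H; apply/matrixP => a b; rewrite [LHS]mxE [RHS]mxE.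
have P0 : nth 0 P 0 \in P by apply: mem_nth; case: (size P) a => [[]|].
have Q0 : nth 0 Q 0 \in Q by apply: mem_nth; case: (size Q) b => [[]|].
have Pa : nth 0 P a \in P by apply: mem_nth.
have Qb : nth 0 Q b \in Q by apply: mem_nth.
rewrite (eq_bigr (fun t => (nth 0 P a - nth 0 P 0) 0 t * (nth 0 Q b - nth 0 Q 0) 0 t)).
  exact: (polar (H _ _ Pa Qb) (H _ _ Pa Q0) (H _ _ P0 Qb) (H _ _ P0 Q0)).
by move=> t _; rewrite !mxE.
Qed.

Lemma rank_ge P (lam : nat) (c : 'rV[R]_d) (r : R) : uniq P -> (1 < size P)%N -> 0 < r ->
  (forall p, p \in P -> enorm (p - c) = r) ->
  (forall l, (l < lam)%N -> ~ in_sphere_dim P l) -> (lam <= \rank (Dmx P))%N.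
Proof.
move=> uP sP r0 Hc Hmin; rewrite leqNgt; apply/negP => hlt.
pose U := <<col_mx (Dmx P) (nth 0 P 0 - c)>>%MS.
have sD : (Dmx P <= U)%MS by rewrite genmxE -addsmxE addsmxSl.
have sc : (nth 0 P 0 - c <= U)%MS by rewrite genmxE -addsmxE addsmxSr.
have rU : (\rank U <= \rank (Dmx P) + 1)%N.
  rewrite genmxE -addsmxE; apply: leq_trans (mxrank_adds_leqif _ _) _.
  by rewrite leq_add2l rank_leq_row.
have rD : (0 < \rank (Dmx P))%N.
  rewrite lt0n mxrank_eq0; apply/eqP => /matrixP h.
  have : nth 0 P 1 - nth 0 P 0 = 0.
    by apply/rowP => j; have := h (Ordinal sP) j; rewrite !mxE /=.
  move/eqP; rewrite subr_eq0 (nth_uniq 0 sP _ uP) //; exact: ltnW.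
have rU1 : (0 < \rank U)%N by apply: leq_trans rD (mxrankS sD).
apply: (Hmin (\rank U).-1); first by lia.
exists c, U, r; split => //; first by rewrite prednK.
move=> p pP; split; last exact: Hc.
have -> : p - c = (p - nth 0 P 0) + (nth 0 P 0 - c) by rewrite addrA subrK.
by apply: addmx_sub => //; apply: submx_trans (Dmx_sub pP) sD.
Qed.
End Geo.

Section Comb.
Local Open Scope nat_scope.
Variables (k : nat) (E : rel 'I_k).
Hypothesis Esym : symmetric E.
Hypothesis Eirr : irreflexive E.

Lemma path_iota (f : nat -> 'I_k) m n :
  (forall i, (m <= i)%N -> (i < m + n)%N -> E (f i) (f i.+1)) ->
  path E (f m) [seq f i | i <- iota m.+1 n].
Proof.
elim: n m => [|n IH] m H //=.
rewrite H ?leqnn ?addnS ?ltnS ?leq_addr //=.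
apply: IH => i h1 h2; apply: H; lia.
Qed.

Lemma last_iota1 n : last 0%N (iota 1 n) = n.
Proof.
case: n => // n; have -> : iota 1 n.+1 = iota 1 (n + 1) by rewrite addn1.
by rewrite iotaD last_cat /= add1n.
Qed.

Lemma cyc_of_fun (f : nat -> 'I_k) n : (2 <= n)%N ->
  (forall i, (i < n)%N -> E (f i) (f i.+1)) -> E (f n) (f 0%N) ->
  (forall i j, (i <= n)%N -> (j <= n)%N -> f i = f j -> i = j) ->
  is_graph_cycle E [seq f i | i <- iota 0 n.+1].
Proof.
move=> n2 He Hc Hi; split; last by rewrite size_map size_iota.
apply/andP; split.
  rewrite /= rcons_path; apply/andP; split.
    by apply: path_iota => i _ h; apply: He; lia.
  by rewrite last_map last_iota1.
rewrite map_inj_in_uniq ?iota_uniq // => i j; rewrite !mem_iota => h1 h2.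
apply: Hi; lia.
Qed.

Variables (g : nat) (s : seq 'I_k) (x0 : 'I_k).
Hypothesis g5 : (5 <= g)%N.
Hypothesis sz : size s = g.
Hypothesis ucs : ucycle E s.
Hypothesis gmin : forall s', is_graph_cycle E s' -> (g <= size s')%N.

Definition c i := nth x0 s (i %% g).

Lemma c_in i : c i \in s.
Proof. by rewrite /c mem_nth // sz ltn_pmod //; lia. Qed.

Lemma c_eq i j : (c i == c j) = (i %% g == j %% g).
Proof.
have g0 : (0 < g)%N by lia.
have us : uniq s by case/andP: ucs.
by rewrite /c nth_uniq // sz ltn_pmod.
Qed.

Lemma c_mod i j : i %% g = j %% g -> c i = c j.
Proof. by move=> h; apply/eqP; rewrite c_eq h. Qed.

Lemma c_edge i : E (c i) (c i.+1).
Proof.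
have cy : cycle E s by case/andP: ucs.
have g0 : (0 < g)%N by lia.
move: cy; rewrite (cycle_path x0) => /(pathP x0) H.
rewrite /c -addn1 -modnDml addn1.
have hr := ltn_pmod i g0.
case: (ltnP (i %% g).+1 g) => h2.
  rewrite (modn_small h2).
  by have := H (i %% g).+1; rewrite sz => /(_ h2) /=.
have -> : (i %% g).+1 = g by lia.
have -> : i %% g = g.-1 by lia.
rewrite modnn; have := H 0%N; rewrite sz => /(_ g0) /=.
by rewrite -nth_last sz.
Qed.

Lemma arc_inj a i j : (i < g)%N -> (j < g)%N -> c (a + i) = c (a + j) -> i = j.
Proof.
move=> hi hj /eqP; rewrite c_eq eqn_modDl !modn_small //; by move/eqP.
Qed.

Lemma no_chord a b : (a < b)%N -> (b < g)%N -> E (c a) (c b) ->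
  b = a.+1 \/ (a = 0 /\ b = g.-1)%N.
Proof.
move=> hab hb hE.
case: (boolP ((b == a.+1) || ((a == 0) && (b == g.-1))%N)).
  by case/orP => [/eqP|/andP[/eqP ? /eqP ?]]; [left|right].
move=> hn.
pose m := (b - a)%N.
have h1 : (g <= m.+1)%N.
  have := gmin (@cyc_of_fun (fun i => c (a + i)) m _ _ _ _).
  rewrite size_map size_iota; apply.
  - by move: hn; rewrite /m; lia.
  - by move=> i _; rewrite addnS; apply: c_edge.
  - by rewrite /m subnKC ?(ltnW hab) // addn0 Esym.
  - move=> i j hi hj; apply: arc_inj; rewrite /m in hi hj; lia.
have h2 : (g <= (g - m).+1)%N.
  have := gmin (@cyc_of_fun (fun i => c (b + i)) (g - m) _ _ _ _).
  rewrite size_map size_iota; apply.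
  - by move: hn; rewrite /m; lia.
  - by move=> i _; rewrite addnS; apply: c_edge.
  - rewrite addn0; have -> : c (b + (g - m)) = c a.
      by apply: c_mod; rewrite /m (_ : (b + (g - (b - a)) = a + g)%N) ?modnDr //; lia.
    exact: hE.
  - move=> i j hi hj; apply: arc_inj; rewrite /m in hi hj; lia.
rewrite /m in h1 h2; lia.
Qed.

Lemma fan_cycle w a m : w \notin s -> (1 <= m)%N -> (m < g)%N -> E w (c a) -> E w (c (a + m)) ->
  (g <= m.+2)%N.
Proof.
move=> ws m1 mg h1 h2.
have := gmin (@cyc_of_fun (fun i => if i is j.+1 then c (a + j) else w) m.+1 _ _ _ _).
rewrite size_map size_iota; apply.
- lia.
- move=> [|i] _ /=; first by rewrite addn0.
  by rewrite addnS; apply: c_edge.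
- by rewrite /= Esym.
- have cw : forall j, c j != w by move=> j; apply: contraNneq ws => <-; apply: c_in.
  move=> [|i] [|j] hi hj //=.
  + by move=> h; have := cw (a + j); rewrite h eqxx.
  + by move=> h; have := cw (a + i); rewrite h eqxx.
  + by move=> h; congr S; apply: arc_inj h; lia.
Qed.

Lemma no_out w a b : w \notin s -> (a < b)%N -> (b < g)%N -> E w (c a) -> E w (c b) -> False.
Proof.
move=> ws hab hb ha hb'.
have h1 : (g <= (b - a).+2)%N.
  apply: (@fan_cycle w a (b - a) ws _ _ ha); [lia|lia|by rewrite subnKC // ltnW].
have h2 : (g <= (g - (b - a)).+2)%N.
  apply: (@fan_cycle w b (g - (b - a)) ws _ _ hb'); [lia|lia|].
  have -> : c (b + (g - (b - a))) = c a.
    by apply: c_mod; rewrite (_ : (b + (g - (b - a)) = a + g)%N) ?modnDr //; lia.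
  exact: ha.
lia.
Qed.

Lemma c_index j : j \in s -> c (index j s) = j /\ (index j s < g)%N.
Proof.
move=> js; have hi : (index j s < g)%N by rewrite -sz index_mem.
by rewrite /c modn_small // nth_index.
Qed.

Definition Nb w := [set j | (j \in s) && E w j].

Lemma Nb_card w : (#|Nb w| <= 1 + (w \in s))%N.
Proof.
case: (boolP (w \in s)) => ws.
  have [ca ha] := c_index ws.
  set a := index w s in ca ha.
  have sub : Nb w \subset [set c a.+1; c (a + g.-1)].
    apply/fintype.subsetP => j; rewrite !inE => /andP[js hE].
    have [cb hb] := c_index js; set b := index j s in cb hb.
    rewrite -cb -ca in hE *.
    case: (ltngtP a b) => hab.
    - case: (no_chord hab hb hE) => [->|[h0 ->]]; first by rewrite eqxx.
      by rewrite h0 add0n eqxx orbT.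
    - rewrite Esym in hE; case: (no_chord hab ha hE) => [->|[h0 h1]].
        by apply/orP; right; apply/eqP; apply: c_mod; rewrite (_ : (b.+1 + g.-1 = b + g)%N) ?modnDr //; lia.
      apply/orP; left; apply/eqP; apply: c_mod; rewrite h0 h1 mod0n (_ : (g.-1.+1 = g)%N) ?modnn //; lia.
    - by move: hE; rewrite hab Eirr.
  apply: leq_trans (subset_leq_card sub) _; rewrite cards2; by case: (_ != _).
case: (set_0Vmem (Nb w)) => [->|[j0 hj0]]; first by rewrite cards0.
have sub : Nb w \subset [set j0].
  apply/fintype.subsetP => j; move: hj0; rewrite !inE => /andP[j0s h0] /andP[js hE].
  have [c0 ha] := c_index j0s; have [cb hb] := c_index js.
  rewrite -c0 in h0; rewrite -cb in hE.
  case: (ltngtP (index j0 s) (index j s)) => hab.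
  - by case: (no_out ws hab hb h0 hE).
  - by case: (no_out ws hab ha hE h0).
  - by rewrite -cb -c0 hab.
by apply: leq_trans (subset_leq_card sub) _; rewrite cards1.
Qed.

Definition Tset w := [set j | (j \in s) && (j != w) && ~~ E w j].

Lemma T_card w : (g <= #|Tset w| + 1 + (w \in s) + (w \in s))%N.
Proof.
have us : uniq s by case/andP: ucs.
pose S := [set j | j \in s].
have cS : #|S| = g by rewrite cardsE -sz; apply/card_uniqP.
have sub : S :\ w \subset Tset w :|: Nb w.
  apply/fintype.subsetP => j; rewrite !inE => /andP[jw js]; rewrite js jw /=.
  by case: (E w j).
have hs := subset_leq_card sub; rewrite cardsU in hs.
have e := cardsD1 w S; rewrite cS inE in e.
have hN := Nb_card w.
move: e hN hs; case: (w \in s) => /= e hN hs; lia.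
Qed.
End Comb.


Lemma pair_sum (f : nat -> nat) (l d : nat) :
  (forall i, (i < l)%N -> (f (2 * i) + f (2 * i).+1 <= d)%N) ->
  (\sum_(m < 2 * l) f m <= l * d)%N.
Proof.
elim: l => [|l IH] H; first by rewrite big_ord0.
have -> : (2 * l.+1 = (2 * l).+2)%N by lia.
rewrite !big_ord_recr /=.
have h1 := IH (fun i hi => H i (ltnW hi)).
have h2 := H l (ltnSn l).
rewrite [(l.+1 * d)%N]mulSn -addnA addnC; exact: leq_add h2 h1.
Qed.

Section Main.
Variables (R : realType) (d k : nat) (E : rel 'I_k) (lam : 'I_k -> nat).
Variable P : 'I_k -> seq 'rV[R]_d.
Hypotheses (Esym : symmetric E) (Eirr : irreflexive E).
Hypotheses (uP : forall i, uniq (P i)) (prof : is_profile P lam) (comp : compatible E P).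
Hypothesis lam2 : forall i, (2 <= lam i)%N.

Lemma size_big i : (3 < size (P i))%N.
Proof.
have := prof i; case: ifP => h; last by move/negbT: h; rewrite -ltnNge.
by move=> e; have := lam2 i; rewrite e.
Qed.

Lemma vert_rank i j : E i j -> (lam i <= \rank (Dmx (P i)))%N.
Proof.
move=> hE; have si := size_big i; have sj := size_big j.
have := prof i; rewrite leqNgt si /= => -[hd hsph hmin].
have [c0 [r [r0 Hc]]] : exists c0 r, 0 < r /\ forall p, p \in P i -> enorm (p - c0) = r.
  case: (ltnP (lam i) d) => hl.
    have [c0 [U [r [r0 _ H]]]] := hsph hl.
    by exists c0, r; split => // p pP; exact: (H p pP).2.
  exists (nth 0 (P j) 0), 1; split => // p pP.
  by apply: comp hE _ _ pP _; apply: mem_nth; apply: leq_trans _ sj.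
by apply: rank_ge (uP i) _ r0 Hc hmin; lia.
Qed.

Lemma orth_edge i j : E i j -> orth <<Dmx (P i)>>%MS <<Dmx (P j)>>%MS.
Proof.
move=> hE.
apply: (orth_subl (A := Dmx (P i))); first by rewrite genmxE.
apply: (orth_subr (B := Dmx (P j))); first by rewrite genmxE.
by apply: orth_D => p q hp hq; apply: comp hE _ _ hp hq.
Qed.

Lemma zeta_le g s x0 : (5 <= g)%N -> size s = g -> ucycle E s ->
  (forall s', is_graph_cycle E s' -> (g <= size s')%N) ->
  zeta R E lam <= (\sum_(m < g) lam (c g s x0 m))%:R / (g.-1)%:R.
Proof.
move=> g5 sz ucs gmin.
have us : uniq s by case/andP: ucs.
pose t : R := (g.-1)%:R^-1.
have t0 : 0 <= t by rewrite invr_ge0 ler0n.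
have tg : t * (g.-1)%:R = 1 by rewrite mulVf // pnatr_eq0; lia.
pose x := fun i => if i \in s then t else 0.
have feas : lp_feasible E lam x.
  move=> i; split; first by rewrite /x; case: ifP.
  have eS : \sum_(j < k | (j != i) && ~~ E i j) x j = #|Tset E s i|%:R * t.
    rewrite big_mkcond /=.
    rewrite (eq_bigr (fun j => if j \in Tset E s i then t else 0)); last first.
      move=> j _; rewrite /x inE.
      by case: (j \in s); case: (j != i); case: (E i j).
    by rewrite -big_mkcond /= sumr_const mulr_natl.
  rewrite eS; have hT := T_card Esym Eirr x0 g5 sz ucs gmin i.
  rewrite -[X in X <= _]tg /x; case: ifP => his.
    rewrite -mulrDl [X in _ <= X]mulrC; apply: (ler_wpM2l t0).
    rewrite -natrD ler_nat; move: hT; rewrite his; have := lam2 i; lia.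
  rewrite mulr0 add0r [X in _ <= X]mulrC; apply: (ler_wpM2l t0).
  rewrite ler_nat; move: hT; rewrite his; lia.
have obj : lp_obj lam x = (\sum_(m < g) lam (c g s x0 m))%:R * t.
  rewrite /lp_obj (eq_bigr (fun i => if i \in s then (lam i)%:R * t else 0)); last first.
    by move=> i _; rewrite /x; case: ifP; rewrite ?mulr0.
  rewrite -big_mkcond /= -mulr_suml -natr_sum; congr (_%:R * _).
  rewrite -(big_uniq _ us) (big_nth x0) sz big_mkord.
  by apply: eq_bigr => m _; rewrite /c modn_small.
have hlb : has_lbound [set lp_obj lam x | x in @lp_feasible R k E lam].
  exists 0 => y [z hz <-]; apply: sumr_ge0 => i _; apply: mulr_ge0 => //.
  exact: (hz i).1.
have := ge_inf hlb (ex_intro2 _ _ x feas erefl).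
by rewrite /zeta obj.
Qed.

Lemma lam_rank g s x0 : (5 <= g)%N -> size s = g -> ucycle E s ->
  (\sum_(m < g) lam (c g s x0 m) <= \sum_(m < g) \rank <<Dmx (P (c g s x0 m))>>%MS)%N.
Proof.
move=> g5 sz ucs; apply: leq_sum => m _; rewrite mxrank_gen.
exact: (vert_rank (c_edge x0 g5 sz ucs m)).
Qed.

Lemma odd_bound g l s x0 : g = (2 * l).+1 -> (1 < l)%N -> size s = g -> ucycle E s ->
  (\sum_(m < g) \rank <<Dmx (P (c g s x0 m))>>%MS <= l * d)%N.
Proof.
move=> eg l1 sz ucs.
have g5 : (5 <= g)%N by lia.
subst g.
apply: (odd_cycle_rank (V := fun m => <<Dmx (P (c (2 * l).+1 s x0 m))>>%MS)).
  by move=> i _; apply: orth_edge; exact: c_edge.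
rewrite /=.
have -> : c (2 * l).+1 s x0 0 = c (2 * l).+1 s x0 (2 * l).+1.
  by apply: c_mod => //; first exact: ucs; rewrite modnn mod0n.
by apply: orth_edge; exact: c_edge.
Qed.

Lemma even_bound l s x0 : (2 < l)%N -> size s = (2 * l)%N -> ucycle E s ->
  (\sum_(m < (2 * l)%N) \rank <<Dmx (P (c (2 * l) s x0 m))>>%MS <= l * d)%N.
Proof.
move=> l1 sz ucs.
have g5 : (5 <= 2 * l)%N by lia.
apply: (pair_sum (f := fun m => \rank <<Dmx (P (c (2 * l) s x0 m))>>%MS)) => i _ /=.
apply: orth_rank; apply: orth_edge; exact: c_edge.
Qed.
End Main.

Unset Implicit Arguments.
Set Strict Implicit.

Theorem theorem11p3 (R : realType) (d k : nat) (E : rel 'I_k) (lam : 'I_k -> nat) :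
  symmetric E -> irreflexive E ->
  realisable R d E lam ->
  (forall i, (2 <= lam i)%N) ->
  (forall l : nat, (1 < l)%N -> has_girth E (2 * l + 1)%N ->
     zeta R E lam <= d%:R / 2) /\
  (forall l : nat, (2 < l)%N -> has_girth E (2 * l)%N ->
     zeta R E lam <= l%:R / (2 * l - 1)%N%:R * d%:R).
Proof.
move=> Esym Eirr [P [uP prof comp]] lam2.
split => l hl [[s [[ucs _] sz]] gmin].
- have x0 : 'I_k by case: s sz {ucs gmin} => [|y ?] /= h; [lia | exact: y].
  have g5 : (5 <= 2 * l + 1)%N by lia.
  apply: le_trans (@zeta_le R _ _ _ Esym Eirr lam2 _ _ x0 g5 sz ucs gmin) _.
  have h := leq_trans (@lam_rank R d _ _ _ P uP prof comp lam2 _ _ x0 g5 sz ucs) (@odd_bound R d _ _ P comp _ l _ x0 (addn1 _) hl sz ucs).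
  have -> : (2 * l + 1).-1 = (2 * l)%N by lia.
  apply: (@le_trans _ _ ((l * d)%N%:R / (2 * l)%N%:R)).
    by apply: ler_wpM2r; [rewrite invr_ge0 ler0n | rewrite ler_nat].
  have l0 : (l%:R : R) != 0 by rewrite pnatr_eq0; lia.
  rewrite natrM natrM le_eqVlt; apply/orP; left; apply/eqP; field; exact: l0.
- have x0 : 'I_k by case: s sz {ucs gmin} => [|y ?] /= h; [lia | exact: y].
  have g5 : (5 <= 2 * l)%N by lia.
  apply: le_trans (@zeta_le R _ _ _ Esym Eirr lam2 _ _ x0 g5 sz ucs gmin) _.
  have h := leq_trans (@lam_rank R d _ _ _ P uP prof comp lam2 _ _ x0 g5 sz ucs) (@even_bound R d _ _ P comp l _ x0 hl sz ucs).
  have -> : (2 * l).-1 = (2 * l - 1)%N by lia.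
  apply: (@le_trans _ _ ((l * d)%N%:R / (2 * l - 1)%N%:R)).
    by apply: ler_wpM2r; [rewrite invr_ge0 ler0n | rewrite ler_nat].
  by rewrite natrM mulrAC.
Qed.
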